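(* Let $n\ge2$. <ul> <li>If $n\equiv1,2,3\pmod 4$, then $\Gamma^k\subseteq\mathrm{Q}$ for all $k=1,2,\dots,n-1$.</li> <li>If $n\equiv0\pmod4$, then $\Gamma^k\subseteq\mathrm{Q}$ for all odd $k$ with $1\le k\le n-1$, and $\Gamma^k\subseteq\mathrm{Q}'$ for all even $k$ with $2\le k\le n-2$.</li> </ul> In particular, $\Gamma^k\subseteq\mathrm{P}$ for $1\le k\le n-1$.
   Context: Let $\mathrm{C}$ be either the real Clifford algebra $C\ell_{p,q}$ with $p+q=n$, or the complex Clifford algebra $C\ell(\mathbb{C}^n)$. It has identity $e$ and generators $e_1,\dots,e_n$ satisfying $e_ae_b+e_be_a=2\eta_{ab}e$. In the real case $\eta=\mathrm{diag}(1,\dots,1,-1,\dots,-1)$ with $p$ entries $+1$ and $q$ entries $-1$. In the complex case $\eta=I_n$. $\mathrm{C}^k$ is the grade-$k$ subspace, spanned by the products $e_{a_1}\cdots e_{a_k}$ with $a_1<\dots<a_k$. The even subspace is $\mathrm{C}^{(0)}=\bigoplus_{k\text{ even}}\mathrm{C}^k$ and the odd subspace is $\mathrm{C}^{(1)}=\bigoplus_{k\text{ odd}}\mathrm{C}^k$. The reversion $U\mapsto\tilde U$ is the linear anti-automorphism acting on $\mathrm{C}^k$ as $(-1)^{k(k-1)/2}$. For $S\subseteq\mathrm{C}$, $S^\times$ is the set of elements of $S$ invertible in $\mathrm{C}$, and $\mathrm{C}^{\times(j)}:=(\mathrm{C}^{(j)})^\times$. $\mathrm{Z}$ is the center: $\mathrm{Z}=\mathrm{C}^0$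 for $n$ even and $\mathrm{Z}=\mathrm{C}^0\oplus\mathrm{C}^n$ for $n$ odd. Define: <ul> <li>$\Gamma^k=\{T\in\mathrm{C}^\times: T\,\mathrm{C}^k\,T^{-1}\subseteq\mathrm{C}^k\}$;</li> <li>$\mathrm{P}:=\mathrm{Z}^\times(\mathrm{C}^{\times(0)}\cup\mathrm{C}^{\times(1)})=\{WT: W\in\mathrm{Z}^\times, T\in\mathrm{C}^{\times(0)}\cup\mathrm{C}^{\times(1)}\}$;</li> <li>$\mathrm{Q}:=\{T\in\mathrm{P}:\tilde TT\in\mathrm{Z}^\times\}$;</li> <li>$\mathrm{Q}':=\{T\in\mathrm{P}:\tilde TT\in(\mathrm{C}^0\oplus\mathrm{C}^n)^\times\}$.</li> </ul> *)

(* Defs.v *)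
From HB Require Import structures.
From mathcomp Require Import all_boot all_order all_algebra.
From mathcomp Require Import reals complex.
Set Implicit Arguments. Unset Strict Implicit. Unset Printing Implicit Defensive.
Import Order.TTheory GRing.Theory Num.Theory.
Local Open Scope ring_scope.

(* An element is the family
   of its coordinates on the blade basis e_A = e_{a1} ... e_{ak}, a1 < ... < ak,
   indexed by subsets A of 'I_n.  (e_a e_b + e_b e_a = 2 eta_ab e with
   eta_ab = eta a if a = b, 0 otherwise.) *)
Definition cl (F : fieldType) (n : nat) := {ffun {set 'I_n} -> F}.

Section Clifford.
Variables (F : fieldType) (n : nat) (eta : 'I_n -> F).

Definition blade (A : {set 'I_n}) : cl F n := [ffun C => (C == A)%:R].

Definition clone : cl F n := blade set0.

(* e_A e_B = bsign A B * e_{A symdiff B} *)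
Definition bsign (A B : {set 'I_n}) : F :=
  (-1) ^+ #|[set ab : 'I_n * 'I_n | [&& ab.1 \in A, ab.2 \in B & (val ab.2 < val ab.1)%N]]|
  * \prod_(i in A :&: B) eta i.

Definition symdiff (A B : {set 'I_n}) := (A :\: B) :|: (B :\: A).

Definition clmul (x y : cl F n) : cl F n :=
  [ffun C => \sum_(A : {set 'I_n}) \sum_(B : {set 'I_n})
     (symdiff A B == C)%:R * (x A * y B * bsign A B)].

Definition clrev (x : cl F n) : cl F n :=
  [ffun A : {set 'I_n} => (-1) ^+ ((#|A| * (#|A| - 1)) %/ 2) * x A].

Definition in_grades (G : nat -> bool) (x : cl F n) : Prop :=
  forall A : {set 'I_n}, x A != 0 -> G #|A|.

Definition in_grade (k : nat) := in_grades (fun j => j == k).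
Definition in_even := in_grades (fun j => ~~ odd j).
Definition in_odd := in_grades (fun j => odd j).
Definition in_grade0n := in_grades (fun j => (j == 0%N) || (j == n)).
Definition in_center (x : cl F n) : Prop :=
  if odd n then in_grade0n x else in_grade 0 x.

Definition clinvertible (x : cl F n) : Prop :=
  exists y, clmul x y = clone /\ clmul y x = clone.

Definition Gamma (k : nat) (T : cl F n) : Prop :=
  exists Tinv, [/\ clmul T Tinv = clone, clmul Tinv T = clone &
    forall U, in_grade k U -> in_grade k (clmul (clmul T U) Tinv)].

Definition Pset (T : cl F n) : Prop :=
  exists W T0, [/\ in_center W, clinvertible W,
    (in_even T0 \/ in_odd T0), clinvertible T0 & T = clmul W T0].

Definition Qset (T : cl F n) : Prop :=
  Pset T /\ in_center (clmul (clrev T) T) /\ clinvertible (clmul (clrev T) T).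

Definition Q'set (T : cl F n) : Prop :=
  Pset T /\ in_grade0n (clmul (clrev T) T) /\ clinvertible (clmul (clrev T) T).

Definition theorem_claim : Prop :=
  (2 <= n)%N ->
  [/\ (n %% 4 != 0)%N ->
        forall k, (1 <= k <= n - 1)%N -> forall T, Gamma k T -> Qset T,
      (n %% 4 == 0)%N ->
        (forall k, odd k -> (1 <= k <= n - 1)%N -> forall T, Gamma k T -> Qset T)
        /\ (forall k, ~~ odd k -> (2 <= k <= n - 2)%N ->
              forall T, Gamma k T -> Q'set T)
    & forall k, (1 <= k <= n - 1)%N -> forall T, Gamma k T -> Pset T].

End Clifford.

Definition eta_pq (R : realType) (p q : nat) (i : 'I_(p + q)) : R :=
  if (i < p)%N then 1 else -1.

Definition eta_one (F : fieldType) (n : nat) (i : 'I_n) : F := 1.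

(* Main.v *)
Require Import Defs.
From HB Require Import structures.
From mathcomp Require Import all_boot all_order all_algebra.
From mathcomp Require Import reals complex.
Set Implicit Arguments. Unset Strict Implicit. Unset Printing Implicit Defensive.
From mathcomp Require Import ring zify.
Import Order.TTheory GRing.Theory Num.Theory.
Local Open Scope ring_scope.

Section Gen.
Variables (F : fieldType) (n : nat) (eta : 'I_n -> F).
Hypothesis eta_nz : forall i, eta i != 0.
Hypothesis two_nz : (2 : F) != 0.

Local Notation cl := (cl F n).
Local Notation "x ** y" := (clmul eta x y) (at level 40, left associativity).
Local Notation bsign := (bsign eta).
Local Notation sd := (@symdiff n).
Implicit Types A B C D E X S : {set 'I_n}.

Definition scl (a : F) (x : cl) : cl := [ffun C => a * x C].
Local Notation "a *s x" := (scl a x) (at level 40).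

Lemma in_sd (A B : {set 'I_n}) i : (i \in sd A B) = (i \in A) (+) (i \in B).
Proof. by rewrite /symdiff !inE; case: (i \in A); case: (i \in B). Qed.

Lemma sdK A B : sd A (sd A B) = B.
Proof. by apply/setP=> i; rewrite !in_sd; case: (i \in A); case: (i \in B). Qed.

Lemma sdC A B : sd A B = sd B A.
Proof. by apply/setP=> i; rewrite !in_sd; case: (i \in A); case: (i \in B). Qed.

Lemma sdA A B C : sd A (sd B C) = sd (sd A B) C.
Proof. by apply/setP=> i; rewrite !in_sd; case: (i \in A); case: (i \in B); case: (i \in C). Qed.

Lemma sd0 A : sd set0 A = A.
Proof. by apply/setP=> i; rewrite !in_sd inE. Qed.

Lemma sd_eq A B C : (sd A B == C) = (B == sd A C).
Proof.
apply/eqP/eqP=> [<-|->]; first by rewrite sdK. by rewrite sdK.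
Qed.

Lemma clmulE (x y : cl) C :
  (x ** y) C = \sum_A x A * y (sd A C) * bsign A (sd A C).
Proof.
rewrite ffunE; apply: eq_bigr => A _.
rewrite (bigD1 (sd A C)) //= big1 ?addr0; first by rewrite sdK eqxx mul1r.
by move=> B /negPf nB; rewrite sd_eq nB mul0r.
Qed.

Lemma clmulDl (x y z : cl) : (x + y) ** z = x ** z + y ** z.
Proof.
apply/ffunP=> C; rewrite clmulE [RHS]ffunE !clmulE -big_split /=; apply: eq_bigr => A _.
by rewrite ffunE !mulrDl.
Qed.

Lemma clmulDr (x y z : cl) : x ** (y + z) = x ** y + x ** z.
Proof.
apply/ffunP=> C; rewrite clmulE [RHS]ffunE !clmulE -big_split /=; apply: eq_bigr => A _.
by rewrite ffunE !mulrDr !mulrDl.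
Qed.

Lemma clmulZl a (x y : cl) : (a *s x) ** y = a *s (x ** y).
Proof.
apply/ffunP=> C; rewrite clmulE [RHS]ffunE !clmulE mulr_sumr; apply: eq_bigr => A _.
by rewrite ffunE; ring.
Qed.

Lemma clmulZr a (x y : cl) : x ** (a *s y) = a *s (x ** y).
Proof.
apply/ffunP=> C; rewrite clmulE [RHS]ffunE !clmulE mulr_sumr; apply: eq_bigr => A _.
by rewrite ffunE; ring.
Qed.

Lemma sclN1 (x : cl) : (-1) *s x = - x.
Proof. by apply/ffunP=> C; rewrite !ffunE mulN1r. Qed.
Lemma scl0 (x : cl) : 0 *s x = 0.
Proof. by apply/ffunP=> C; rewrite !ffunE mul0r. Qed.
Lemma scl1 (x : cl) : 1 *s x = x.
Proof. by apply/ffunP=> C; rewrite !ffunE mul1r. Qed.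
Lemma sclA a b (x : cl) : a *s (b *s x) = (a * b) *s x.
Proof. by apply/ffunP=> C; rewrite !ffunE mulrA. Qed.
Lemma sclDr a (x y : cl) : a *s (x + y) = a *s x + a *s y.
Proof. by apply/ffunP=> C; rewrite !ffunE mulrDr. Qed.
Lemma sclDl a b (x : cl) : (a + b) *s x = a *s x + b *s x.
Proof. by apply/ffunP=> C; rewrite !ffunE mulrDl. Qed.

Lemma clmulNl (x y : cl) : (- x) ** y = - (x ** y).
Proof. by rewrite -sclN1 clmulZl sclN1. Qed.
Lemma clmulNr (x y : cl) : x ** (- y) = - (x ** y).
Proof. by rewrite -sclN1 clmulZr sclN1. Qed.
Lemma clmulBl (x y z : cl) : (x - y) ** z = x ** z - y ** z.
Proof. by rewrite clmulDl clmulNl. Qed.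
Lemma clmulBr (x y z : cl) : x ** (y - z) = x ** y - x ** z.
Proof. by rewrite clmulDr clmulNr. Qed.
Lemma clmul0l (x : cl) : 0 ** x = 0.
Proof. by apply/ffunP=> C; rewrite clmulE ffunE big1 // => A _; rewrite ffunE !mul0r. Qed.
Lemma clmul0r (x : cl) : x ** 0 = 0.
Proof. by apply/ffunP=> C; rewrite clmulE ffunE big1 // => A _; rewrite ffunE mulr0 mul0r. Qed.

Definition sig (a b : 'I_n) : F := if (val b < val a)%N then -1 else 1.
Definition eps (A B : {set 'I_n}) : F := \prod_(a in A) \prod_(b in B) sig a b.
Definition Hp (X : {set 'I_n}) : F := \prod_(i in X) eta i.

Lemma Nsign A B : (-1) ^+ #|[set ab : 'I_n * 'I_n | [&& ab.1 \in A, ab.2 \in B & (val ab.2 < val ab.1)%N]]| = eps A B :> F.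
Proof.
rewrite -sum1dep_card expr_sum big_mkcond /=.
rewrite -(pair_bigA _ (fun a b => if [&& a \in A, b \in B & (val b < val a)%N] then (-1)^+1 else 1)) /=.
rewrite /eps [RHS]big_mkcond; apply: eq_bigr => a _ /=.
case: (a \in A) => /=; last by rewrite big1.
rewrite [RHS]big_mkcond; apply: eq_bigr => b _ /=.
by case: (b \in B) => //=; rewrite /sig; case: ifP.
Qed.

Lemma bsignE A B : bsign A B = eps A B * Hp (A :&: B).
Proof. by rewrite /Defs.bsign Nsign. Qed.

Lemma prod_sd (h : 'I_n -> F) A B : (forall i, h i * h i = 1) ->
  \prod_(i in sd A B) h i = \prod_(i in A) h i * \prod_(i in B) h i.
Proof.
move=> hh; rewrite !(big_mkcond (fun i => i \in _)) -big_split; apply: eq_bigr => i _.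
by rewrite in_sd; case: (i \in A); case: (i \in B); rewrite /= ?mulr1 ?mul1r ?hh.
Qed.

Lemma sig2 a b : sig a b * sig a b = 1.
Proof. by rewrite /sig; case: ifP => _; rewrite ?mulrNN mulr1. Qed.

Lemma eps2 A B : eps A B * eps A B = 1.
Proof.
rewrite /eps -big_split big1 // => a _; rewrite -big_split big1 // => b _; exact: sig2.
Qed.

Lemma eps_sdl A B C : eps (sd A B) C = eps A C * eps B C.
Proof.
apply: prod_sd => a; rewrite -big_split big1 // => b _; exact: sig2.
Qed.

Lemma eps_sdr A B C : eps A (sd B C) = eps A B * eps A C.
Proof. rewrite /eps -big_split; apply: eq_bigr => a _; apply: prod_sd => b; exact: sig2. Qed.

Lemma Hmaj A B C : Hp (A :&: B) * Hp (sd A B :&: C) = Hp (A :&: sd B C) * Hp (B :&: C).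
Proof.
rewrite /Hp !(big_mkcond (fun i => i \in _)) -!big_split; apply: eq_bigr => i _.
rewrite !(in_setI, in_sd); case: (i \in A); case: (i \in B); case: (i \in C);
  by rewrite /= ?mulr1 ?mul1r.
Qed.

Lemma aux_ring (e1 e2 e3 h1 h2 h3 h4 : F) : h1 * h2 = h3 * h4 ->
  e1 * h1 * (e2 * e3 * h2) = e1 * e2 * h3 * (e3 * h4).
Proof.
move=> h; transitivity (e1 * e2 * e3 * (h1 * h2)); first ring.
by rewrite h; ring.
Qed.

Lemma bsign_cocycle A B C :
  bsign A B * bsign (sd A B) C = bsign A (sd B C) * bsign B C.
Proof. by rewrite !bsignE eps_sdl eps_sdr; apply: aux_ring; apply: Hmaj. Qed.

Lemma sd_inj A : injective (sd A).
Proof. by move=> B C e; rewrite -(sdK A B) e sdK. Qed.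

Lemma clmulA (x y z : cl) : x ** (y ** z) = (x ** y) ** z.
Proof.
apply/ffunP=> D; rewrite !clmulE.
under [LHS]eq_bigr => A _ do rewrite clmulE mulr_sumr mulr_suml.
under [RHS]eq_bigr => E _ do rewrite clmulE !mulr_suml.
rewrite [RHS]exchange_big /=; apply: eq_bigr => A _.
rewrite [RHS](reindex_inj (@sd_inj A)) /=.
apply: eq_bigr => B _; rewrite sdK.
have e1 : sd (sd A B) D = sd B (sd A D).
  by apply/setP=> i; rewrite !in_sd; case: (i \in A); case: (i \in B); case: (i \in D).

have e2 : sd A D = sd B (sd B (sd A D)) by rewrite sdK.
rewrite e1 [in bsign A (sd A D)]e2.
move: (bsign_cocycle A B (sd B (sd A D))) => hc.
transitivity (x A * y B * z (sd B (sd A D)) * (bsign B (sd B (sd A D)) * bsign A (sd B (sd B (sd A D))))); first ring.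
rewrite [bsign B _ * _]mulrC -hc; ring.
Qed.

Lemma bsign0l B : bsign set0 B = 1.
Proof. by rewrite bsignE /eps big_set0 set0I /Hp big_set0 mulr1. Qed.
Lemma bsign0r A : bsign A set0 = 1.
Proof.
rewrite bsignE setI0 /Hp big_set0 mulr1 /eps big1 // => a _; by rewrite big_set0.
Qed.

Lemma sdvv A : sd A A = set0.
Proof. by apply/setP=> i; rewrite in_sd inE addbb. Qed.

Lemma clmul1x (y : cl) : clone F n ** y = y.
Proof.
apply/ffunP=> C; rewrite clmulE (bigD1 set0) //= big1 ?addr0.
  by rewrite ffunE eqxx mul1r sd0 bsign0l mulr1.
by move=> A nA; rewrite ffunE (negPf nA) !mul0r.
Qed.

Lemma clmulx1 (x : cl) : x ** clone F n = x.
Proof.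
apply/ffunP=> C; rewrite clmulE (bigD1 C) //= big1 ?addr0.
  by rewrite sdvv ffunE eqxx bsign0r !mulr1.
move=> A nA; rewrite ffunE.
suff -> : (sd A C == set0) = false by rewrite mulr0 mul0r.
apply/negP=> /eqP e; move: nA; rewrite -(sdK A C) e.
by rewrite sdC sd0 eqxx.
Qed.

Definition rho A C := eps A C * eps C A.
Definition tau (a c : 'I_n) : F := if a == c then 1 else -1.

Lemma eps_nz A B : eps A B != 0.
Proof. apply/eqP=> e; move: (eps2 A B); rewrite e mul0r => /eqP; by rewrite eq_sym oner_eq0. Qed.

Lemma Hp_nz X : Hp X != 0.
Proof. by apply/prodf_neq0 => i _; exact: eta_nz. Qed.

Lemma bsign_nz A B : bsign A B != 0.
Proof. by rewrite bsignE mulf_neq0 ?eps_nz ?Hp_nz. Qed.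

Lemma bsign_swap A C : bsign A C = rho A C * bsign C A.
Proof.
rewrite !bsignE /rho setIC.
transitivity (eps A C * (eps C A * eps C A) * Hp (C :&: A)); last by ring.
by rewrite eps2 mulr1.
Qed.

Lemma sdKr A B : sd (sd A B) B = A.
Proof. by apply/setP=> i; rewrite !in_sd; case: (i \in A); case: (i \in B). Qed.

Lemma mul_blade_l A (x : cl) D : (blade F A ** x) D = x (sd A D) * bsign A (sd A D).
Proof.
rewrite clmulE (bigD1 A) //= big1 ?addr0; first by rewrite ffunE eqxx mul1r.
by move=> B nB; rewrite ffunE (negPf nB) !mul0r.
Qed.

Lemma mul_blade_r A (x : cl) D : (x ** blade F A) D = x (sd A D) * bsign (sd A D) A.
Proof.
rewrite clmulE (bigD1 (sd A D)) //= big1 ?addr0.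
  by rewrite sdKr ffunE eqxx mulr1.
move=> B nB; rewrite ffunE.
suff -> : (sd B D == A) = false by rewrite mulr0 mul0r.
apply/negP=> /eqP e; move: nB; by rewrite -e sdKr eqxx.
Qed.

Lemma tau_sig a c : sig a c * sig c a = tau a c.
Proof.
rewrite /sig /tau; have [h|h|h] := ltngtP (val c) (val a).
- have -> : (a == c) = false by apply/negP=> /eqP e; move: h; rewrite e ltnn.
  by rewrite mulr1.
- have -> : (a == c) = false by apply/negP=> /eqP e; move: h; rewrite e ltnn.
  by rewrite mul1r.
- have e : a = c by apply: val_inj.
  by rewrite e eqxx mulr1.
Qed.

Lemma rho_val A C : rho A C = \prod_(a in A) \prod_(c in C) tau a c.
Proof.
rewrite /rho /eps [X in _ * X]exchange_big /= -big_split; apply: eq_bigr => a _.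
by rewrite -big_split; apply: eq_bigr => c _; exact: tau_sig.
Qed.

Definition iota C (a : 'I_n) : F := if a \in C then -1 else 1.

Lemma rho_formula A C : rho A C = \prod_(a in A) ((-1) ^+ #|C| * iota C a).
Proof.
rewrite rho_val; apply: eq_bigr => a _.
have -> : \prod_(c in C) tau a c = \prod_(c in C) ((-1) * (if a == c then -1 else 1)).
  by apply: eq_bigr => c _; rewrite /tau; case: ifP; rewrite ?mulrNN ?mulr1 ?mulN1r.
rewrite big_split /= prodr_const /iota; congr (_ * _).
case: ifP => aC.
  rewrite (bigD1 a) //= eqxx big1 ?mulr1 // => c /andP [_ ca].
  by rewrite eq_sym (negPf ca).
by rewrite big1 // => c cC; rewrite ifF //; apply/negP=> /eqP e; move: aC; rewrite e cC.
Qed.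

Lemma rho1 a C : rho [set a] C = (-1) ^+ #|C| * iota C a.
Proof. by rewrite rho_formula big_set1. Qed.

Lemma rho_sdl A B C : rho (sd A B) C = rho A C * rho B C.
Proof. rewrite /rho eps_sdl eps_sdr; ring. Qed.

Lemma rho2 A C : rho A C * rho A C = 1.
Proof.
transitivity ((eps A C * eps A C) * (eps C A * eps C A)); first by rewrite /rho; ring.
by rewrite !eps2 mulr1.
Qed.

Lemma comm_blade_coef A (x : cl) D :
  (blade F A ** x) D = rho A (sd A D) * (x ** blade F A) D.
Proof. by rewrite mul_blade_l mul_blade_r bsign_swap; ring. Qed.

Lemma commute_coef A (x : cl) : blade F A ** x = x ** blade F A ->
  forall C, x C != 0 -> rho A C = 1.
Proof.
move=> e C xC; move: (comm_blade_coef A x (sd A C)); rewrite e sdK => h.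
have nz : (x ** blade F A) (sd A C) != 0.
  by rewrite mul_blade_r sdK mulf_neq0 ?bsign_nz.
by apply/eqP; rewrite -(inj_eq (mulIf nz)) mul1r -h.
Qed.

Lemma commute_of A (x : cl) : (forall C, x C != 0 -> rho A C = 1) ->
  blade F A ** x = x ** blade F A.
Proof.
move=> h; apply/ffunP=> D; rewrite comm_blade_coef.
case: (eqVneq (x (sd A D)) 0) => xz.
  by rewrite mul_blade_r xz !mul0r mulr0.
by rewrite h // mul1r.
Qed.

Lemma anticommute_of A (x : cl) : (forall C, x C != 0 -> rho A C = -1) ->
  blade F A ** x = - (x ** blade F A).
Proof.
move=> h; apply/ffunP=> D; rewrite comm_blade_coef [RHS]ffunE.
case: (eqVneq (x (sd A D)) 0) => xz.
  by rewrite mul_blade_r xz !mul0r mulr0 oppr0.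
by rewrite h // mulN1r.
Qed.

Lemma exists_S (a b : 'I_n) m : (m <= n - 2)%N ->
  exists S : {set 'I_n}, [/\ #|S| = m, a \notin S & b \notin S].
Proof.
move=> hm; set R := ~: [set a; b].
have cR : (n - 2 <= #|R|)%N.
  rewrite /R cardsCs setCK card_ord; apply: leq_sub2l; rewrite cards2; by case: (a != b).
exists [set i in take m (enum R)]; split.
- rewrite cardsE; apply/eqP; move: (take_uniq m (enum_uniq (pred_of_set R))) => /card_uniqP ->.
  rewrite size_takel //; rewrite -cardE; exact: leq_trans hm cR.
- rewrite inE; apply/negP => /mem_take; rewrite mem_enum !inE eqxx; by [].
- rewrite inE; apply/negP => /mem_take; rewrite mem_enum !inE eqxx orbT; by [].
Qed.

Lemma setU1_sd (a : 'I_n) S : a \notin S -> a |: S = sd [set a] S.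
Proof.
move=> aS; apply/setP=> i; rewrite in_sd !inE.
case: (eqVneq i a) => [->|]; first by rewrite (negPf aS).
by [].
Qed.

Lemma two_ords : (1 < n)%N -> exists a b : 'I_n, a != b.
Proof.
move=> n2; exists (Ordinal (ltn_trans (ltnSn 0) n2)), (Ordinal n2).
by apply/eqP => /(congr1 val).
Qed.

Lemma rho_nz A C : rho A C != 0.
Proof. apply/eqP=> e; move: (rho2 A C); rewrite e mul0r => /eqP; by rewrite eq_sym oner_eq0. Qed.

Lemma m1_nz : (-1 : F) != 0.
Proof. by rewrite oppr_eq0 oner_neq0. Qed.

Lemma m1_neq1 : (-1 : F) != 1.
Proof.
apply/eqP=> e; move: two_nz; rewrite -[2]/(1 + 1)%R.
by rewrite -{1}e addNr eqxx.
Qed.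

Lemma comm_grade_sets k (x : cl) : (1 <= k)%N -> (k <= n - 1)%N ->
  (forall A, #|A| = k -> blade F A ** x = x ** blade F A) ->
  forall C, x C != 0 -> C = set0 \/ C = setT.
Proof.
move=> k1 kn hc C xC.
have key : forall a b : 'I_n, a != b -> (a \in C) = (b \in C).
  move=> a b ab.
  have [S [cS aS bS]] := exists_S a b (m := k.-1)
    ltac:(lia).
  have cA : forall c, c \notin S -> #|c |: S| = k.
    by move=> c cS'; rewrite cardsU1 cS' cS add1n prednK.
  have r1 := commute_coef (hc _ (cA a aS)) xC.
  have r2 := commute_coef (hc _ (cA b bS)) xC.
  rewrite setU1_sd // rho_sdl in r1; rewrite setU1_sd // rho_sdl in r2.
  have : rho [set a] C = rho [set b] C.
    by apply: (mulIf (rho_nz S C)); rewrite r1 r2.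
  rewrite !rho1 => /(mulfI (expf_neq0 _ m1_nz)); rewrite /iota.
  case: (a \in C); case: (b \in C) => //= e.
  - by move/eqP: e; rewrite ?(negPf m1_neq1) // eq_sym (negPf m1_neq1).
  - by move/eqP: e; rewrite ?(negPf m1_neq1) // eq_sym (negPf m1_neq1).
case: (set_0Vmem C) => [-> | [a aC]]; [by left | right].
apply/setP=> b; rewrite inE.
case: (eqVneq a b) => [<- // | ab]; by rewrite -(key _ _ ab).
Qed.

Lemma comm_grade0n k (x : cl) : (1 <= k)%N -> (k <= n - 1)%N ->
  (forall A, #|A| = k -> blade F A ** x = x ** blade F A) ->
  in_grade0n x.
Proof.
move=> k1 kn hc C xC; case: (comm_grade_sets k1 kn hc xC) => ->.
  by rewrite cards0.
by rewrite cardsT card_ord eqxx orbT.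
Qed.

Lemma comm_grade_center k (x : cl) : (1 <= k)%N -> (k <= n - 1)%N -> odd k ->
  (forall A, #|A| = k -> blade F A ** x = x ** blade F A) ->
  in_center x.
Proof.
move=> k1 kn ko hc; rewrite /in_center; case: ifP => no.
  exact: comm_grade0n hc.
move=> C xC; case: (comm_grade_sets k1 kn hc xC) => eC; first by rewrite eC cards0.
exfalso.
have n2 : (1 < n)%N by lia.
have [a [b ab]] := two_ords n2.
have [S [cS aS bS]] := exists_S a b (m := k.-1)
    ltac:(lia).
have cA : #|a |: S| = k by rewrite cardsU1 aS cS add1n prednK.
have := commute_coef (hc _ cA) xC; rewrite eC rho_formula.
under eq_bigr => c _ do rewrite cardsT card_ord /iota inE -signr_odd no expr0 mul1r.
by rewrite prodr_const cA -signr_odd ko expr1 => /eqP; rewrite (negPf m1_neq1).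
Qed.

Definition par (b : bool) (x : cl) := in_grades (fun j => odd j == b) x.
Definition ev (x : cl) : cl := [ffun A : {set 'I_n} => if odd #|A| then 0 else x A].
Definition od (x : cl) : cl := [ffun A : {set 'I_n} => if odd #|A| then x A else 0].

Lemma ev_od x : ev x + od x = x.
Proof. by apply/ffunP=> A; rewrite !ffunE; case: ifP; rewrite ?add0r ?addr0. Qed.

Lemma par_ev x : par false (ev x).
Proof. by move=> A; rewrite ffunE; case: (odd #|A|); rewrite ?eqxx. Qed.
Lemma par_od x : par true (od x).
Proof. by move=> A; rewrite ffunE; case: (odd #|A|); rewrite ?eqxx. Qed.

Lemma par_even x : par false x -> in_even x.
Proof. by move=> h A /h; case: (odd _). Qed.
Lemma par_odd x : par true x -> in_odd x.
Proof. by move=> h A /h; case: (odd _). Qed.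

Lemma sign_card X : (-1 : F) ^+ #|X| = \prod_(i in X) (-1).
Proof. by rewrite prodr_const. Qed.

Lemma odd_sd A B : odd #|sd A B| = odd #|A| (+) odd #|B|.
Proof.
have h : (-1 : F) ^+ #|sd A B| = (-1) ^+ #|A| * (-1) ^+ #|B|.
  by rewrite !sign_card; apply: (@prod_sd (fun=> -1)) => i; rewrite mulrNN mulr1.
move: h; rewrite -(signr_odd _ #|sd A B|) -(signr_odd _ #|A|) -(signr_odd _ #|B|) -signr_addb.
case: (odd #|sd A B|); case: (odd #|A| (+) odd #|B|) => //= /eqP;
  rewrite ?expr1 ?expr0 ?(negPf m1_neq1) // eq_sym (negPf m1_neq1) //.
Qed.

Lemma grades_mul (P : nat -> bool) (x y : cl) :
  (forall A B, x A != 0 -> y B != 0 -> P #|sd A B|) ->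
  in_grades P (x ** y).
Proof.
move=> h C; apply: contraR => nP; rewrite clmulE big1 // => A _.
case: (eqVneq (x A) 0) => [->|xA]; first by rewrite !mul0r.
case: (eqVneq (y (sd A C)) 0) => [->|yA]; first by rewrite mulr0 mul0r.
by move: (h _ _ xA yA); rewrite sdK (negPf nP).
Qed.

Lemma par_mul b c x y : par b x -> par c y -> par (b (+) c) (x ** y).
Proof.
move=> hx hy; apply: grades_mul => A B xA yB.
by rewrite odd_sd (eqP (hx _ xA)) (eqP (hy _ yB)).
Qed.

Lemma par_add b x y : par b x -> par b y -> par b (x + y).
Proof.
move=> hx hy A; rewrite ffunE => h.
case: (eqVneq (x A) 0) => [xA|xA]; last exact: hx.
by apply: hy; move: h; rewrite xA add0r.
Qed.

Lemma par_scl b a x : par b x -> par b (a *s x).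
Proof. move=> hx A; rewrite ffunE mulf_eq0 negb_or => /andP [_]; exact: hx. Qed.

Lemma par_zero b (u : cl) C : par b u -> odd #|C| != b -> u C = 0.
Proof. by move=> hu ob; case: (eqVneq (u C) 0) => // uC; move: (hu _ uC); rewrite (negPf ob). Qed.

Lemma par_split b (u v u' v' : cl) : par b u -> par (~~ b) v -> par b u' -> par (~~ b) v' ->
  u + v = u' + v' -> u = u' /\ v = v'.
Proof.
move=> hu hv hu' hv' e; split; apply/ffunP=> C; move/ffunP: e => /(_ C); rewrite !ffunE;
case: (eqVneq (odd #|C|) b) => ob.
- have nb : odd #|C| != ~~ b by rewrite ob; case: b {hu hv hu' hv' ob}.
  by rewrite (par_zero hv nb) (par_zero hv' nb) !addr0.
- by rewrite (par_zero hu ob) (par_zero hu' ob).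
- have nb : odd #|C| != ~~ b by rewrite ob; case: b {hu hv hu' hv' ob}.
  by rewrite (par_zero hv nb) (par_zero hv' nb).
- by rewrite (par_zero hu ob) (par_zero hu' ob) !add0r.
Qed.

Lemma grade_par k x : in_grade k x -> par (odd k) x.
Proof. by move=> h A /h /eqP ->. Qed.

Lemma intertwine b (T U V : cl) : par b U -> par b V -> V ** T = T ** U ->
  V ** od T = od T ** U.
Proof.
move=> hU hV e.
have := @par_split b (V ** ev T) (V ** od T) (ev T ** U) (od T ** U).
rewrite -clmulDr -clmulDl !ev_od => h; apply: (h _ _ _ _ e).2.
- by rewrite -[b]addbF; apply: par_mul => //; exact: par_ev.
- by rewrite -addbT; apply: par_mul => //; exact: par_od.
- by rewrite -[b]addFb; apply: par_mul => //; exact: par_ev.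
- by rewrite -addTb; apply: par_mul => //; exact: par_od.
Qed.

Lemma Ncnt_sum A B : #|[set ab : 'I_n * 'I_n | [&& ab.1 \in A, ab.2 \in B & (val ab.2 < val ab.1)%N]]|
  = (\sum_(a in A) \sum_(b in B) (val b < val a))%N.
Proof.
rewrite -sum1dep_card big_mkcond /=.
rewrite -(pair_bigA _ (fun a b => if [&& a \in A, b \in B & (val b < val a)%N] then 1%N else 0%N)) /=.
rewrite [RHS]big_mkcond; apply: eq_bigr => a _ /=.
case: (a \in A) => /=; last by rewrite big1.
rewrite [RHS]big_mkcond; apply: eq_bigr => b _ /=.
by case: (b \in B) => //=; case: ifP.
Qed.

Lemma Ncnt_self A : ((\sum_(a in A) \sum_(b in A) (val b < val a)).*2 + #|A| = #|A| * #|A|)%N.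
Proof.
have h1 : (\sum_(a in A) \sum_(b in A) ((val b < val a) + (val a < val b) + (a == b)) = #|A| * #|A|)%N.
  transitivity (\sum_(a in A) \sum_(b in A) 1)%N.
    apply: eq_bigr => a _; apply: eq_bigr => b _.
    rewrite -val_eqE; by case: (ltngtP (val b) (val a)) => h.
  under eq_bigr => a _ do rewrite sum1_card.
  by rewrite sum_nat_const.
rewrite -h1; under [RHS]eq_bigr => a _ do rewrite !big_split /=.
rewrite !big_split /= -addnn; congr (_ + _ + _).
  by rewrite exchange_big.
rewrite -sum1_card; apply: eq_bigr => a aA.
by rewrite (bigD1 a) //= eqxx big1 // => b /andP [_ ba]; rewrite eq_sym (negPf ba).
Qed.

Lemma clrevE (x : cl) A : clrev x A = eps A A * x A.
Proof.
rewrite ffunE -Nsign Ncnt_sum; congr (_ ^+ _ * _).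
have e := Ncnt_self A.
by rewrite mulnBr muln1 -e addnK divn2 doubleK.
Qed.

Definition rsgn (k : nat) : F := (-1) ^+ ((k * (k - 1)) %/ 2).

Lemma rev_grade k (x : cl) : in_grade k x -> clrev x = rsgn k *s x.
Proof.
move=> h; apply/ffunP=> A; rewrite !ffunE.
case: (eqVneq (x A) 0) => [->|xA]; first by rewrite !mulr0.
by rewrite (eqP (h _ xA)).
Qed.

Lemma rev_setT (x : cl) : clrev x setT = rsgn n * x setT.
Proof. by rewrite ffunE cardsT card_ord. Qed.

Lemma rev_rev (x : cl) : clrev (clrev x) = x.
Proof. by apply/ffunP=> A; rewrite !clrevE mulrA eps2 mul1r. Qed.

Lemma rev_one : clrev (clone F n) = clone F n.
Proof.
apply/ffunP=> A; rewrite clrevE ffunE.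
case: (eqVneq A set0) => [->|nA]; last by rewrite mulr0.
by rewrite /eps big_set0 mul1r.
Qed.

Lemma sd_swap D A : sd (sd D A) D = A.
Proof. by apply/setP=> i; rewrite !in_sd; case: (i \in A); case: (i \in D). Qed.

Lemma eps_self A C : eps (sd A C) (sd A C) * rho A C = eps A A * eps C C.
Proof.
rewrite eps_sdl !eps_sdr /rho.
transitivity (eps A A * eps C C * (eps A C * eps A C) * (eps C A * eps C A)); first by ring.
by rewrite !eps2 !mulr1.
Qed.

Lemma rev_mul (x y : cl) : clrev (x ** y) = clrev y ** clrev x.
Proof.
apply/ffunP=> D; rewrite clrevE !clmulE mulr_sumr.
rewrite [RHS](reindex_inj (@sd_inj D)) /=; apply: eq_bigr => A _.
rewrite sd_swap !clrevE [sd D A]sdC bsign_swap.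
set C := sd A D.
have eD : eps D D * rho A C = eps A A * eps C C.
  by rewrite -{1 2}(sdK A D) -/C eps_self.
transitivity (eps D D * rho A C * (x A * y C * bsign C A)); first by ring.
by rewrite eD; ring.
Qed.

Local Notation eN := (blade F (setT : {set 'I_n})).
Local Notation one := (clone F n).
Definition sN := bsign setT setT.

Lemma mul_blades A B : blade F A ** blade F B = bsign A B *s blade F (sd A B).
Proof.
apply/ffunP=> D; rewrite mul_blade_l !ffunE sd_eq.
by case: eqP => [->|_]; rewrite ?sdK ?mulr1 ?mulr0 ?mul0r ?mul1r.
Qed.

Lemma eN2 : eN ** eN = sN *s one.
Proof. by rewrite mul_blades sdvv. Qed.

Lemma sN_nz : sN != 0.
Proof. exact: bsign_nz. Qed.

Lemma rho_T C : rho setT C = ((-1) ^+ n * -1) ^+ #|C|.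
Proof.
rewrite /rho mulrC -/(rho C setT) rho_formula -[in RHS]prodr_const; apply: eq_bigr => c _.
by rewrite cardsT card_ord /iota inE.
Qed.

Lemma eN_central : odd n -> forall x, eN ** x = x ** eN.
Proof.
move=> no x; apply: commute_of => C _.
by rewrite rho_T -signr_odd no expr1 mulrNN mulr1 expr1n.
Qed.

Lemma eN_comm_even : ~~ odd n -> forall x, par false x -> eN ** x = x ** eN.
Proof.
move=> no x hx; apply: commute_of => C xC.
by rewrite rho_T -signr_odd (negPf no) expr0 mul1r -signr_odd (eqP (hx _ xC)) expr0.
Qed.

Lemma eN_anti_odd : ~~ odd n -> forall x, par true x -> eN ** x = - (x ** eN).
Proof.
move=> no x hx; apply: anticommute_of => C xC.
by rewrite rho_T -signr_odd (negPf no) expr0 mul1r -signr_odd (eqP (hx _ xC)) expr1.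
Qed.

Lemma par_eN : par (odd n) eN.
Proof.
move=> A; rewrite ffunE; case: (eqVneq A setT) => [->|]; last by rewrite eqxx.
by rewrite cardsT card_ord eqxx.
Qed.

Lemma par_one : par false one.
Proof.
move=> A; rewrite ffunE; case: (eqVneq A set0) => [->|]; last by rewrite eqxx.
by rewrite cards0.
Qed.

Definition lin (a b : F) : cl := a *s one + b *s eN.

Lemma lin_mul a b c d : lin a b ** lin c d = lin (a * c + b * d * sN) (a * d + b * c).
Proof.
rewrite /lin !clmulDl !clmulDr !clmulZl !clmulZr !clmul1x clmulx1 eN2.
by apply/ffunP=> C; rewrite !ffunE; ring.
Qed.

Lemma lin_mulx a b x : lin a b ** x = a *s x + b *s (eN ** x).
Proof. by rewrite /lin clmulDl !clmulZl clmul1x. Qed.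

Lemma mulx_lin a b x : x ** lin a b = a *s x + b *s (x ** eN).
Proof. by rewrite /lin clmulDr !clmulZr clmulx1. Qed.

Lemma lin_set0 a b : (0 < n)%N -> lin a b set0 = a.
Proof.
move=> n0; rewrite !ffunE eqxx.
suff -> : (set0 == setT :> {set 'I_n}) = false by rewrite mulr0 mulr1 addr0.
apply/negP=> /eqP e; have : (Ordinal n0) \in (setT : {set 'I_n}) by rewrite inE.
by rewrite -e inE.
Qed.

Lemma lin_grade0n a b : in_grade0n (lin a b).
Proof.
move=> C; rewrite !ffunE.
case: (eqVneq C set0) => [->|_]; first by rewrite cards0.
case: (eqVneq C setT) => [->|_]; first by rewrite cardsT card_ord eqxx orbT.
by rewrite !mulr0 addr0 eqxx.
Qed.

Lemma setT_neq0 : (0 < n)%N -> (setT : {set 'I_n}) != set0.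
Proof.
move=> n0; apply/negP=> /eqP e; have : (Ordinal n0) \in (setT : {set 'I_n}) by rewrite inE.
by rewrite e inE.
Qed.

Lemma grade0n_lin (x : cl) : (0 < n)%N -> in_grade0n x -> x = lin (x set0) (x setT).
Proof.
move=> n0 h; have nT := setT_neq0 n0.
apply/ffunP=> C; rewrite !ffunE.
case: (eqVneq (x C) 0) => [xC|xC].
  case: (eqVneq C set0) => [e|nC0].
    subst C; by rewrite xC eq_sym (negPf nT) mul0r mulr0 addr0.
  case: (eqVneq C setT) => [e|nCT].
    subst C; by rewrite xC mul0r mulr0 addr0.
  by rewrite xC !mulr0 addr0.
case/orP: (h _ xC) => hC.
  have e : C = set0 by apply/eqP; rewrite -cards_eq0.
  by rewrite e eqxx eq_sym (negPf nT) mulr1 mulr0 addr0.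
have e : C = setT by apply/eqP; rewrite eqEcard subsetT cardsT card_ord (eqP hC) leqnn.
by rewrite e eqxx (negPf nT) mulr1 mulr0 add0r.
Qed.

Lemma lin10 : lin 1 0 = one.
Proof. by apply/ffunP=> C; rewrite !ffunE mul0r addr0 mul1r. Qed.
Lemma lin00 : lin 0 0 = 0.
Proof. by apply/ffunP=> C; rewrite !ffunE !mul0r addr0. Qed.
Lemma scl_lin d a b : d *s lin a b = lin (d * a) (d * b).
Proof. by apply/ffunP=> C; rewrite !ffunE; ring. Qed.
Lemma lin_eq a b c d : a = c -> b = d -> lin a b = lin c d.
Proof. by move=> -> ->. Qed.
Lemma lin_comm a b c d : lin a b ** lin c d = lin c d ** lin a b.
Proof. by rewrite !lin_mul; apply: lin_eq; ring. Qed.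
Lemma scl_eq0 a (x : cl) : a != 0 -> a *s x = 0 -> x = 0.
Proof.
move=> a0 /ffunP h; apply/ffunP=> C; move: (h C); rewrite !ffunE => /eqP.
by rewrite mulf_eq0 (negPf a0) => /eqP.
Qed.
Lemma par0 b : par b 0.
Proof. by move=> A; rewrite ffunE eqxx. Qed.
Lemma sclN a (x : cl) : a *s (- x) = (- a) *s x.
Proof. by apply/ffunP=> C; rewrite !ffunE mulrN mulNr. Qed.
Lemma scl_mul a (x y : cl) : (a *s x) ** y = x ** (a *s y).
Proof. by rewrite clmulZl clmulZr. Qed.
Lemma add4 (p q r s : cl) : (p + s) + (r + q) = (p + q) + (r + s).
Proof. by apply/ffunP=> C; rewrite !ffunE; ring. Qed.
Lemma sclx0 a : a *s (0 : cl) = 0.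
Proof. by apply/ffunP=> C; rewrite !ffunE mulr0. Qed.

Lemma one_center : in_center one.
Proof.
rewrite /in_center; case: ifP => _ A; rewrite ffunE; case: (eqVneq A set0) => [->|];
  by rewrite ?cards0 ?eqxx.
Qed.

Lemma one_inv : clinvertible eta one.
Proof. by exists one; rewrite clmul1x. Qed.

Lemma Pset_even (T Tinv : cl) : T ** Tinv = one -> Tinv ** T = one -> in_even T -> Pset eta T.
Proof.
move=> h1 h2 hT; exists one, T; split; rewrite ?clmul1x //.
- exact: one_center.
- exact: one_inv.
- by left.
- by exists Tinv.
Qed.

Lemma Pset_odd (T Tinv : cl) : T ** Tinv = one -> Tinv ** T = one -> in_odd T -> Pset eta T.
Proof.
move=> h1 h2 hT; exists one, T; split; rewrite ?clmul1x //.
- exact: one_center.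
- exact: one_inv.
- by right.
- by exists Tinv.
Qed.

Lemma inv_factor (W Winv T0 T Tinv : cl) : W ** Winv = one -> Winv ** W = one ->
  T = W ** T0 -> T ** Tinv = one -> Tinv ** T = one -> clinvertible eta T0.
Proof.
move=> w1 w2 eT t1 t2.
have e0 : T0 = Winv ** T by rewrite eT clmulA w2 clmul1x.
exists (Tinv ** W); split.
  by rewrite e0 -clmulA [T ** _]clmulA t1 clmul1x w2.
by rewrite -clmulA -eT t2.
Qed.

Lemma par_lin_even a b : ~~ odd n -> par false (lin a b).
Proof.
move=> no; apply: par_add; apply: par_scl; first exact: par_one.
by have := par_eN; rewrite (negPf no).
Qed.

Lemma solve_lin (p q : cl) a b : b != 0 -> a *s p + b *s q = 0 -> q = (- (a / b)) *s p.
Proof.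
move=> b0 /ffunP h; apply/ffunP=> C; move: (h C); rewrite !ffunE => /eqP.
rewrite addr_eq0 => /eqP h'.
have hq : b * q C = - (a * p C) by rewrite h' opprK.
apply: (mulfI b0); rewrite hq; field; exact: b0.
Qed.

Lemma P_of (T Tinv : cl) : (0 < n)%N -> T ** Tinv = one -> Tinv ** T = one ->
  in_grade0n (Tinv ** od T) -> Pset eta T.
Proof.
move=> n0 hTT hTiT hX.
set X := Tinv ** od T in hX.
have TX : T ** X = od T by rewrite /X clmulA hTT clmul1x.
have eX := grade0n_lin n0 hX.
set a := X set0 in eX; set b := X setT in eX.
have eT := ev_od T.
case: (boolP (odd n)) => no.
-
  have hc := eN_central no.
  have pe : par true eN by have := par_eN; rewrite no.
  have hsplit := @par_split false (a *s ev T + b *s (od T ** eN)) (b *s (ev T ** eN) + a *s od T)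
    0 (od T).
  have [u0 v0] : a *s ev T + b *s (od T ** eN) = 0 /\ b *s (ev T ** eN) + a *s od T = od T.
    apply: hsplit.
    - apply: par_add; apply: par_scl; first exact: par_ev.
      by rewrite -[false]/(true (+) true); apply: par_mul => //; exact: par_od.
    - apply: par_add; apply: par_scl; last exact: par_od.
      by rewrite -[~~ false]/(false (+) true); apply: par_mul => //; exact: par_ev.
    - exact: par0.
    - exact: par_od.
    rewrite add0r -{3}TX eX mulx_lin -[in RHS]eT clmulDl !sclDr.
    by rewrite add4.
  case: (eqVneq b 0) => b0.
    rewrite b0 scl0 addr0 in u0; rewrite b0 scl0 add0r in v0.
    case: (eqVneq a 0) => a0.
      rewrite a0 scl0 in v0.
      apply: (Pset_even hTT hTiT); rewrite -eT -v0 addr0; exact: par_even (@par_ev T).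
    have e0 := scl_eq0 a0 u0.
    apply: (Pset_odd hTT hTiT); rewrite -eT e0 add0r; exact: par_odd (@par_od T).
  have h1 : od T ** eN = (- (a / b)) *s ev T.
    exact: solve_lin b0 u0.
  set c := - (a / b) / sN.
  have h2 : od T = c *s (eN ** ev T).
    have einv : eN ** (sN^-1 *s eN) = one by rewrite clmulZr eN2 sclA mulVf ?sN_nz // scl1.
    by rewrite -[od T]clmulx1 -einv clmulA h1 clmulZl clmulZr sclA hc.
  set W := lin 1 c.
  have eW : T = W ** ev T by rewrite /W lin_mulx scl1 -h2 eT.
  have Wc : forall y, W ** y = y ** W by move=> y; rewrite lin_mulx mulx_lin hc.
  set W' := lin 1 (-c).
  have WW : W ** W' = lin (1 + c * (-c) * sN) 0 by rewrite lin_mul; apply: lin_eq; ring.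
  case: (eqVneq (1 + c * (-c) * sN) 0) => d0.
    exfalso; rewrite d0 lin00 in WW.
    have TW : T ** W' = 0 by rewrite eW Wc -clmulA WW clmul0r.
    have W0 : W' = 0 by rewrite -[W']clmul1x -hTiT -clmulA TW clmul0r.
    have := lin_set0 1 (-c) n0; rewrite -/W' W0 ffunE => /eqP; by rewrite eq_sym oner_eq0.
  set Winv := (1 + c * (-c) * sN)^-1 *s W'.
  have w1 : W ** Winv = one by rewrite clmulZr WW scl_lin mulr0 mulVf // lin10.
  have w2 : Winv ** W = one by rewrite clmulZl -/W' lin_comm WW scl_lin mulr0 mulVf // lin10.
  exists W, (ev T); split => //.
  - by rewrite /in_center no; exact: lin_grade0n.
  - by exists Winv.
  - by left; exact: par_even (@par_ev T).
  - exact: (inv_factor w1 w2 eW hTT hTiT).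
- have pX : par false X by rewrite eX; exact: par_lin_even.
  have [Xe Xo] : ev T ** X = 0 /\ od T ** X = od T.
    apply: (@par_split false) => //.
    - by rewrite -[false]/(false (+) false); apply: par_mul => //; exact: par_ev.
    - by rewrite -[~~ false]/(true (+) false); apply: par_mul => //; exact: par_od.
    - exact: par0.
    - exact: par_od.
    by rewrite add0r -clmulDl eT TX.
  set X' := lin a (-b).
  set d := a * a + b * (-b) * sN.
  have XX : X ** X' = lin d 0 by rewrite eX lin_mul; apply: lin_eq; rewrite /d; ring.
  case: (eqVneq d 0) => d0.
    have XTe : X ** ev T = 0.
      by rewrite eX lin_mulx (eN_comm_even no (@par_ev T)) -mulx_lin -eX Xe.
    have XTo' : X ** od T = od T ** X'.
      by rewrite eX lin_mulx (eN_anti_odd no (@par_od T)) sclN -mulx_lin.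
    have XTo : X ** od T = 0.
      by rewrite XTo' -{1}Xo -clmulA XX d0 lin00 clmul0r.
    have XT : X ** T = 0 by rewrite -eT clmulDr XTe XTo addr0.
    have X0 : X = 0 by rewrite -[X]clmulx1 -hTT clmulA XT clmul0l.
    have o0 : od T = 0 by rewrite -TX X0 clmul0r.
    apply: (Pset_even hTT hTiT); rewrite -eT o0 addr0; exact: par_even (@par_ev T).
  set Xi := d^-1 *s X'.
  have XXi : X ** Xi = one by rewrite clmulZr XX scl_lin mulr0 mulVf // lin10.
  have e0 : ev T = 0 by rewrite -[ev T]clmulx1 -XXi clmulA Xe clmul0l.
  apply: (Pset_odd hTT hTiT); rewrite -eT e0 add0r; exact: par_odd (@par_od T).
Qed.

Lemma blade_grade A : in_grade #|A| (blade F A).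
Proof. by move=> C; rewrite ffunE; case: (eqVneq C A) => [->|]; rewrite ?eqxx. Qed.

Lemma rsgn_nz k : rsgn k != 0.
Proof. exact: expf_neq0 m1_nz. Qed.

Lemma scl_inj a (x y : cl) : a != 0 -> a *s x = a *s y -> x = y.
Proof.
move=> a0 /ffunP h; apply/ffunP=> C; move: (h C); rewrite !ffunE; exact: mulfI.
Qed.

Lemma gamma_core k (T : cl) : Gamma eta k T ->
  exists Tinv, [/\ T ** Tinv = one, Tinv ** T = one,
    (forall A, #|A| = k -> blade F A ** (Tinv ** od T) = (Tinv ** od T) ** blade F A) &
    (forall A, #|A| = k -> blade F A ** (clrev T ** T) = (clrev T ** T) ** blade F A)].
Proof.
move=> [Tinv [h1 h2 hG]]; exists Tinv; split => // A cA.
- set U := blade F A.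
  have hU : in_grade k U by rewrite -cA; exact: blade_grade.
  set V := (T ** U) ** Tinv.
  have hV : in_grade k V := hG U hU.
  have VT : V ** T = T ** U by rewrite /V -clmulA h2 clmulx1.
  have iw := intertwine (grade_par hU) (grade_par hV) VT.
  symmetry; transitivity (((Tinv ** T) ** U) ** (Tinv ** od T)); last by rewrite h2 clmul1x.
  by rewrite -clmulA -iw /V !clmulA.
- set U := blade F A.
  have hU : in_grade k U by rewrite -cA; exact: blade_grade.
  set V := (T ** U) ** Tinv.
  have hV : in_grade k V := hG U hU.
  have VT : V ** T = T ** U by rewrite /V -clmulA h2 clmulx1.
  set R := clrev T; set Ri := clrev Tinv.
  have RRi : R ** Ri = one by rewrite /R /Ri -rev_mul h2 rev_one.
  have eV : V = Ri ** (U ** R).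
    apply: (@scl_inj (rsgn k)); first exact: rsgn_nz.
    rewrite -(rev_grade hV) /V !rev_mul (rev_grade hU) clmulZl clmulZr.
    by rewrite -/R -/Ri clmulA.
  rewrite -clmulA -VT eV.
  by rewrite !clmulA RRi clmul1x.
Qed.

Lemma rev_RT (T : cl) : clrev (clrev T ** T) = clrev T ** T.
Proof. by rewrite rev_mul rev_rev. Qed.

Lemma RT_inv (T Tinv : cl) : T ** Tinv = one -> Tinv ** T = one ->
  clinvertible eta (clrev T ** T).
Proof.
move=> h1 h2; exists (Tinv ** clrev Tinv); split.
  by rewrite -clmulA [T ** _]clmulA h1 clmul1x -rev_mul h2 rev_one.
by rewrite -clmulA [clrev Tinv ** _]clmulA -rev_mul h1 rev_one clmul1x.
Qed.

Lemma rsgn_2mod4 : (n %% 4 = 2)%N -> rsgn n = -1.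
Proof.
move=> h; rewrite /rsgn.
have e : n = (4 * (n %/ 4) + 2)%N by rewrite {1}(divn_eq n 4) h mulnC.
set m := (n %/ 4)%N in e.
have e2 : (n * (n - 1) = 2 * ((2 * m + 1) * (4 * m + 1)))%N by rewrite e; nia.
have o : odd ((2 * m + 1) * (4 * m + 1))%N.
  by rewrite (oddM (2 * m + 1) (4 * m + 1)) (oddD (2 * m) 1) (oddD (4 * m) 1) (oddM 2 m) (oddM 4 m).
by rewrite e2 mulKn // -signr_odd o expr1.
Qed.

Lemma claim_gen : theorem_claim eta.
Proof.
move=> n2.
have n0 : (0 < n)%N by lia.
have PP : forall k, (1 <= k <= n - 1)%N -> forall T, Gamma eta k T -> Pset eta T.
  move=> k /andP [k1 kn] T /gamma_core [Tinv [h1 h2 hX _]].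
  apply: (P_of n0 h1 h2); exact: (comm_grade0n k1 kn hX).
have QQodd : forall k, odd k -> (1 <= k <= n - 1)%N -> forall T, Gamma eta k T -> Qset eta T.
  move=> k ko /andP [k1 kn] T hT; split; first by apply: (PP k) => //; rewrite k1.
  have [Tinv [h1 h2 _ hR]] := gamma_core hT.
  split; first exact: (comm_grade_center k1 kn ko hR).
  exact: RT_inv h1 h2.
split => //.
- move=> n4 k /andP [k1 kn] T hT.
  case: (boolP (odd k)) => ko; first by apply: (QQodd k) => //; rewrite k1.
  split; first by apply: (PP k) => //; rewrite k1.
  have [Tinv [h1 h2 _ hR]] := gamma_core hT.
  split; last exact: RT_inv h1 h2.
  have g0n := comm_grade0n k1 kn hR.
  rewrite /in_center; case: ifP => no //.
  move=> C xC; case/orP: (g0n _ xC) => // /eqP hC; exfalso.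
  have eC : C = setT by apply/eqP; rewrite eqEcard subsetT cardsT card_ord hC leqnn.
  have h4 : (n %% 4 = 2)%N by move: no; move/negbT => no'; lia.
  move: (rev_setT (clrev T ** T)); rewrite rev_RT rsgn_2mod4 // mulN1r => /eqP.
  rewrite -eC -addr_eq0 -mulr2n -mulr_natr mulf_eq0 (negPf two_nz) orbF.
  by rewrite (negPf xC).
- move=> n4; split => //.
  move=> k ko /andP [k1 kn] T hT.
  split; first by apply: (PP k) => //; apply/andP; split; lia.
  have [Tinv [h1 h2 _ hR]] := gamma_core hT.
  split; last exact: RT_inv h1 h2.
  apply: (comm_grade0n (k := k)) => //; first by lia.
  by lia.
Qed.

End Gen.

Theorem mainTheorem12 :
  (forall (R : realType) (p q : nat), theorem_claim (@eta_pq R p q))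
  /\ (forall (R : realType) (n : nat), theorem_claim (@eta_one (complex R) n)).
Proof.
split.
- move=> R p q; apply: claim_gen.
  + by move=> i; rewrite /eta_pq; case: ifP => _; rewrite ?oppr_eq0 oner_eq0.
  + by rewrite pnatr_eq0.
- move=> R n; apply: claim_gen.
  + by move=> i; rewrite /eta_one oner_eq0.
  + by rewrite pnatr_eq0.
Qed.
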